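(* Let $M_n$ be the operator below, and let $N\times K$ matrix functions $\varphi,\psi$ satisfy $$M_n\{\varphi\}=\varphi\Lambda,\qquad M_n^{\tau}\{\psi\}=\psi\tilde\Lambda,$$ where $\Lambda,\tilde\Lambda$ are constant $K\times K$ matrices. Let $C$ be a constant nondegenerate $K\times K$ matrix, and put $$\Delta=C+D^{-1}\{\psi^{\top}\varphi\},\qquad W=I-\varphi\Delta^{-1}D^{-1}\psi^{\top},\qquad \hat M_n:=WM_nW^{-1}.$$ Then $$\Phi:=\varphi\Delta^{-1}=W\{\varphi\}C^{-1},\qquad \Psi:=\psi(\Delta^{-1})^{\top}=(W^{-1})^{\tau}\{\psi\}(C^{\top})^{-1},$$ and these functions satisfy $$\hat M_n\{\Phi\}=\Phi\,C\Lambda C^{-1},\qquad \hat M_n^{\tau}\{\Psi\}=\Psi\,C^{\top}\tilde\Lambda (C^{\top})^{-1}.$$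
   Context: $D=\partial/\partial x$. Operators are formal matrix pseudodifferential operators in $D$ whose coefficients are $N\times N$ matrix functions of $x$ and $t_n$; they may also contain the derivation $\partial_{t_n}$, which commutes with $D$. $P\{f\}$ denotes the action of $P$ on $f$, with $D^{-1}$ a fixed $x$-antiderivative that commutes with $\partial_{t_n}$. The formal transpose $P^\tau$ is the anti-automorphism with $(fD^i)^\tau=(-1)^iD^if^\top$, $\partial_{t_n}^\tau=-\partial_{t_n}$, $(PQ)^\tau=Q^\tau P^\tau$. The operator is $$M_n=\alpha_n\partial_{t_n}-\tilde{\mathcal J}_nD^n-\sum_{i=0}^{n-1}v_iD^i-\gamma\mathbf q\mathcal M_0D^{-1}\mathbf r^\top,$$ where $\alpha_n,\gamma\in\mathbb C$, $\tilde{\mathcal J}_n$ is a constant $N\times N$ matrix, the $v_i$ are $N\times N$ matrix functions, $\mathbf q,\mathbf r$ are $N\times m$ matrix functions, and $\mathcal M_0$ is a constant $m\times m$ matrix. The inverse of $W$ is $W^{-1}=I+\varphi D^{-1}\Delta^{-1}\psi^\top$. *)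

(* Defs.v *)
From HB Require Import structures.
From mathcomp Require Import all_boot all_order all_algebra.
Set Implicit Arguments. Unset Strict Implicit. Unset Printing Implicit Defensive.
Import GRing.Theory.
Local Open Scope ring_scope.

(* F : the field of constant scalars (alpha_n, gamma live here; F = C in the *)
(*     paper).                                                              *)
(* A : the commutative algebra of scalar functions of (x, t_n).             *)
(* dx = D = d/dx, dt = d/dt_n, ix = D^{-1} = the fixed x-antiderivative,    *)
(* ev = "evaluation at the base point" of the antiderivative, i.e.          *)
(*   ix (dx f) = f - ev f   (ix f = \int_{x0}^x f, ev f = f(x0, t)).         *)
(* Matrix functions are matrices over A; operators act entrywise.           *)

Record diffalg (F : fieldType) (A : comUnitAlgType F) := DiffAlg {
  dx : A -> A;
  dt : A -> A;
  ix : A -> A;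
  ev : A -> A }.

Definition good_diffalg (F : fieldType) (A : comUnitAlgType F)
    (S : diffalg A) : Prop :=
  (
      (forall (c : F) (f g : A), dx S (c *: f + g) = c *: dx S f + dx S g) /\
      (forall f g : A, dx S (f * g) = dx S f * g + f * dx S g) /\
      (forall (c : F) (f g : A), dt S (c *: f + g) = c *: dt S f + dt S g) /\
      (forall f g : A, dt S (f * g) = dt S f * g + f * dt S g) /\
      (forall f : A, dx S (dt S f) = dt S (dx S f))) /\
  (
          (forall (c : F) (f g : A), ix S (c *: f + g) = c *: ix S f + ix S g) /\
          (forall f : A, dx S (ix S f) = f) /\
          (forall f : A, ix S (dt S f) = dt S (ix S f)) /\
          (forall f : A, ix S (dx S f) = f - ev S f) /\
          (forall f g : A, ev S (f * g) = ev S f * ev S g)).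

(* Operators: expressions built from multiplication by a matrix function,  *)
(* D, D^{-1}, d/dt_n, sums and products (composition).  op p q maps         *)
(* p x K matrix functions to q x K matrix functions.                        *)

Inductive op (A : Type) : nat -> nat -> Type :=
| OMul p q (a : 'M[A]_(q, p)) : op A p q
| OD p : op A p p
| ODinv p : op A p p
| ODt p : op A p p
| OAdd p q : op A p q -> op A p q -> op A p q
| OComp p q r : op A q r -> op A p q -> op A p r.

Arguments OMul {A p q} a.
Arguments OD {A p}.
Arguments ODinv {A p}.
Arguments ODt {A p}.
Arguments OAdd {A p q} P Q.
Arguments OComp {A p q r} P Q.

Section Ops.
Variables (F : fieldType) (A : comUnitAlgType F) (S : diffalg A).

Fixpoint act {K : nat} {p q : nat} (P : op A p q) : 'M[A]_(p, K) -> 'M[A]_(q, K) :=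
  match P in op _ p q return 'M[A]_(p, K) -> 'M[A]_(q, K) with
  | OMul _ _ a => fun f => a *m f
  | OD _ => fun f => map_mx (dx S) f
  | ODinv _ => fun f => map_mx (ix S) f
  | ODt _ => fun f => map_mx (dt S) f
  | OAdd _ _ P1 P2 => fun f => act P1 f + act P2 f
  | OComp _ _ _ P1 P2 => fun f => act P1 (act P2 f)
  end.

End Ops.

Section Syntax.
Variable A : comUnitRingType.

Definition oid {p} : op A p p := OMul 1%:M.
Definition oneg {p q} (P : op A p q) : op A p q := OComp (OMul (- 1)%:M) P.
Definition osub {p q} (P Q : op A p q) : op A p q := OAdd P (oneg Q).

Fixpoint tau {p q : nat} (P : op A p q) : op A q p :=
  match P in op _ p q return op A q p with
  | OMul _ _ a => OMul a^T
  | OD _ => oneg OD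
  | ODinv _ => oneg ODinv
  | ODt _ => oneg ODt
  | OAdd _ _ P1 P2 => OAdd (tau P1) (tau P2)
  | OComp _ _ _ P1 P2 => OComp (tau P2) (tau P1)
  end.

Fixpoint Dpow {p} (i : nat) : op A p p :=
  match i with 0 => oid | i.+1 => OComp OD (Dpow i) end.

Fixpoint osum {p q} (n : nat) (P : nat -> op A p q) : op A p q :=
  match n with 0 => OMul 0 | n.+1 => OAdd (osum n P) (P n) end.

End Syntax.
Arguments oid {A p}.
Arguments oneg {A p q} P.
Arguments osub {A p q} P Q.
Arguments tau {A p q} P.
Arguments Dpow {A p} i.
Arguments osum {A p q} n P.

Section Operators.
Variables (F : fieldType) (A : comUnitAlgType F) (S : diffalg A).

Definition is_const_mx {m n} (X : 'M[A]_(m, n)) : Prop :=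
  map_mx (dx S) X = 0 /\ map_mx (dt S) X = 0.

Definition Mop (N m n : nat) (alpha gamma : F) (J : 'M[A]_N)
    (v : nat -> 'M[A]_N) (qf rf : 'M[A]_(N, m)) (M0 : 'M[A]_m) : op A N N :=
  osub (OComp (OMul (alpha%:A)%:M) ODt)
   (OAdd (OComp (OMul J) (Dpow n))
    (OAdd (osum n (fun i => OComp (OMul (v i)) (Dpow i)))
          (OComp (OMul ((gamma%:A : A) *: (qf *m M0))) (OComp ODinv (OMul rf^T))))).

Definition Delta {N K} (C : 'M[A]_K) (phi psi : 'M[A]_(N, K)) : 'M[A]_K :=
  C + map_mx (ix S) (psi^T *m phi).

Definition Wop {N K} (C : 'M[A]_K) (phi psi : 'M[A]_(N, K)) : op A N N :=
  osub oid (OComp (OMul (phi *m invmx (Delta C phi psi)))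
                  (OComp ODinv (OMul psi^T))).

Definition Winvop {N K} (C : 'M[A]_K) (phi psi : 'M[A]_(N, K)) : op A N N :=
  OAdd oid (OComp (OMul phi)
                  (OComp ODinv (OMul (invmx (Delta C phi psi) *m psi^T)))).

Definition hatM {N K} (M : op A N N) (C : 'M[A]_K) (phi psi : 'M[A]_(N, K))
  : op A N N := OComp (Wop C phi psi) (OComp M (Winvop C phi psi)).

End Operators.

(* Main.v *)
Require Import Defs.
From HB Require Import structures.
From mathcomp Require Import all_boot all_order all_algebra.
Import GRing.Theory.
Set Implicit Arguments. Unset Strict Implicit. Unset Printing Implicit Defensive.
Local Open Scope ring_scope.

Definition linf (F : fieldType) (A : comUnitAlgType F) (h : A -> A) :=
  forall (c : F) (f g : A), h (c *: f + g) = c *: h f + h g.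


Lemma lin0 (F : fieldType) (A : comUnitAlgType F) (h : A -> A) : linf h -> h 0 = 0.
Proof. move=> hl; have := hl 1 0 0; rewrite !scale1r !addr0 => H.
by apply: (addrI (h 0)); rewrite addr0 -{1}H. Qed.

Lemma linD (F : fieldType) (A : comUnitAlgType F) (h : A -> A) : linf h -> forall f g, h (f + g) = h f + h g.
Proof. by move=> hl f g; have := hl 1 f g; rewrite !scale1r. Qed.

Lemma linN (F : fieldType) (A : comUnitAlgType F) (h : A -> A) : linf h -> forall f, h (- f) = - h f.
Proof. move=> hl f; have := hl (-1) f 0; rewrite !addr0 lin0 // addr0 !scaleN1r. by []. Qed.

Lemma linB (F : fieldType) (A : comUnitAlgType F) (h : A -> A) : linf h -> forall f g, h (f - g) = h f - h g.
Proof. by move=> hl f g; rewrite linD // linN. Qed.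

Lemma linsum (F : fieldType) (A : comUnitAlgType F) (h : A -> A) : linf h -> forall n (G : 'I_n -> A),
  h (\sum_(i < n) G i) = \sum_(i < n) h (G i).
Proof. move=> hl n G; exact: (big_morph h (linD hl) (lin0 hl)). Qed.

Lemma mapD (F : fieldType) (A : comUnitAlgType F) (h : A -> A) : linf h -> forall m n (X Y : 'M[A]_(m,n)),
  map_mx h (X + Y) = map_mx h X + map_mx h Y.
Proof. by move=> hl m n X Y; apply/matrixP=> i j; rewrite !mxE linD. Qed.

Lemma mapN (F : fieldType) (A : comUnitAlgType F) (h : A -> A) : linf h -> forall m n (X : 'M[A]_(m,n)),
  map_mx h (- X) = - map_mx h X.
Proof. by move=> hl m n X; apply/matrixP=> i j; rewrite !mxE linN. Qed.

Lemma mapB (F : fieldType) (A : comUnitAlgType F) (h : A -> A) : linf h -> forall m n (X Y : 'M[A]_(m,n)),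
  map_mx h (X - Y) = map_mx h X - map_mx h Y.
Proof. by move=> hl m n X Y; rewrite mapD // mapN. Qed.

Lemma map_leib (F : fieldType) (A : comUnitAlgType F) (d : A -> A) : linf d ->
  (forall f g, d (f * g) = d f * g + f * d g) ->
  forall m n p (X : 'M[A]_(m,n)) (Y : 'M[A]_(n,p)),
  map_mx d (X *m Y) = map_mx d X *m Y + X *m map_mx d Y.
Proof.
move=> hl hm m n p X Y; apply/matrixP=> i j; rewrite !mxE linsum // -big_split /=.
by apply: eq_bigr => k _; rewrite hm !mxE.
Qed.

Lemma map_mulc (F : fieldType) (A : comUnitAlgType F) (h : A -> A) (P : A -> Prop) : linf h ->
  (forall f c, P c -> h (f * c) = h f * c) ->
  forall m n p (X : 'M[A]_(m,n)) (Y : 'M[A]_(n,p)), (forall i j, P (Y i j)) ->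
  map_mx h (X *m Y) = map_mx h X *m Y.
Proof.
move=> hl hc m n p X Y hY; apply/matrixP=> i j; rewrite !mxE linsum //.
by apply: eq_bigr => k _; rewrite hc // !mxE.
Qed.

Lemma map_dinv (F : fieldType) (A : comUnitAlgType F) (d : A -> A) : linf d ->
  (forall f g, d (f * g) = d f * g + f * d g) ->
  forall n (X : 'M[A]_n), X \in unitmx ->
  map_mx d (invmx X) = - (invmx X *m map_mx d X *m invmx X).
Proof.
move=> hl hm n X hX.
have d1 : d 1 = 0.
  have := hm 1 1; rewrite !mul1r mulr1 => H.
  by apply: (addrI (d 1)); rewrite addr0 -H.
have H := map_leib hl hm X (invmx X).
rewrite mulmxV // in H.
have H0 : map_mx d (1%:M : 'M[A]_n) = 0.
  apply/matrixP=> i j; rewrite !mxE; case: (i == j) => /=; rewrite ?mulr1n ?mulr0n ?d1 ?lin0 //.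
rewrite H0 in H.
rewrite -[map_mx d (invmx X)](mulKmx hX) -[X *m _](subr0) H.
by rewrite opprD addrA addrAC subrr add0r mulmxN mulmxA.
Qed.

Definition scst (F : fieldType) (A : comUnitAlgType F) (S : diffalg A) (a : A) :=
  dx S a = 0 /\ dt S a = 0.


Lemma hdxL (F : fieldType) (A : comUnitAlgType F) (S : diffalg A) : good_diffalg S -> linf (dx S).
Proof. by case=> [[]]. Qed.
Lemma hdxM (F : fieldType) (A : comUnitAlgType F) (S : diffalg A) : good_diffalg S ->
  forall f g, dx S (f * g) = dx S f * g + f * dx S g.
Proof. by case=> [[? []]]. Qed.
Lemma hdtL (F : fieldType) (A : comUnitAlgType F) (S : diffalg A) : good_diffalg S -> linf (dt S).
Proof. by case=> [[? [? []]]]. Qed.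
Lemma hdtM (F : fieldType) (A : comUnitAlgType F) (S : diffalg A) : good_diffalg S ->
  forall f g, dt S (f * g) = dt S f * g + f * dt S g.
Proof. by case=> [[? [? [? []]]]]. Qed.
Lemma hixL (F : fieldType) (A : comUnitAlgType F) (S : diffalg A) : good_diffalg S -> linf (ix S).
Proof. by case=> _ []. Qed.
Lemma hdxix (F : fieldType) (A : comUnitAlgType F) (S : diffalg A) : good_diffalg S ->
  forall f, dx S (ix S f) = f.
Proof. by case=> _ [? []]. Qed.
Lemma hixdx (F : fieldType) (A : comUnitAlgType F) (S : diffalg A) : good_diffalg S ->
  forall f, ix S (dx S f) = f - ev S f.
Proof. by case=> _ [? [? [? []]]]. Qed.
Lemma hevM (F : fieldType) (A : comUnitAlgType F) (S : diffalg A) : good_diffalg S ->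
  forall f g, ev S (f * g) = ev S f * ev S g.
Proof. by case=> _ [? [? [? []]]]. Qed.

Lemma ev_def (F : fieldType) (A : comUnitAlgType F) (S : diffalg A) : good_diffalg S ->
  forall f, ev S f = f - ix S (dx S f).
Proof. by move=> hS f; rewrite hixdx // opprB addrC subrK. Qed.

Lemma hevL (F : fieldType) (A : comUnitAlgType F) (S : diffalg A) : good_diffalg S -> linf (ev S).
Proof.
move=> hS c f g; rewrite !ev_def // (hdxL hS) (hixL hS) scalerBr.
rewrite !opprD !addrA; congr (_ + _); rewrite addrAC //.
Qed.

Lemma ev_ix (F : fieldType) (A : comUnitAlgType F) (S : diffalg A) : good_diffalg S ->
  forall f, ev S (ix S f) = 0.
Proof. by move=> hS f; rewrite ev_def // hdxix // subrr. Qed.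

Lemma ev_c (F : fieldType) (A : comUnitAlgType F) (S : diffalg A) : good_diffalg S ->
  forall c, dx S c = 0 -> ev S c = c.
Proof. by move=> hS c h; rewrite ev_def // h (lin0 (hixL hS)) subr0. Qed.

Lemma d_one (F : fieldType) (A : comUnitAlgType F) (d : A -> A) :
  (forall f g, d (f * g) = d f * g + f * d g) -> d 1 = 0.
Proof.
move=> hm; have := hm 1 1; rewrite !mul1r mulr1 => H.
by apply: (addrI (d 1)); rewrite addr0 -{1}H.
Qed.

Lemma ix_mulc (F : fieldType) (A : comUnitAlgType F) (S : diffalg A) : good_diffalg S ->
  forall f c, dx S c = 0 -> ix S (f * c) = ix S f * c.
Proof.
move=> hS f c hc.
have e : f * c = dx S (ix S f * c) by rewrite hdxM // hdxix // hc mulr0 addr0.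
by rewrite e hixdx // hevM // ev_ix // mul0r subr0.
Qed.

Lemma cst_entry (F : fieldType) (A : comUnitAlgType F) (S : diffalg A) m n (X : 'M[A]_(m,n)) :
  is_const_mx S X -> forall i j, scst S (X i j).
Proof.
case=> h1 h2 i j; split.
  by have := congr1 (fun M : 'M[A]_(m,n) => M i j) h1; rewrite !mxE.
by have := congr1 (fun M : 'M[A]_(m,n) => M i j) h2; rewrite !mxE.
Qed.

Lemma map_ev_mul (F : fieldType) (A : comUnitAlgType F) (S : diffalg A) : good_diffalg S ->
  forall m n p (X : 'M[A]_(m,n)) (Y : 'M[A]_(n,p)),
  map_mx (ev S) (X *m Y) = map_mx (ev S) X *m map_mx (ev S) Y.
Proof.
move=> hS m n p X Y; apply/matrixP=> i j; rewrite !mxE (linsum (hevL hS)).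
by apply: eq_bigr => k _; rewrite hevM // !mxE.
Qed.

Lemma cst_mul (F : fieldType) (A : comUnitAlgType F) (S : diffalg A) : good_diffalg S ->
  forall m n p (X : 'M[A]_(m,n)) (Y : 'M[A]_(n,p)),
  is_const_mx S X -> is_const_mx S Y -> is_const_mx S (X *m Y).
Proof.
move=> hS m n p X Y [hX1 hX2] [hY1 hY2]; split.
  by rewrite (map_leib (hdxL hS) (hdxM hS)) hX1 hY1 mul0mx mulmx0 addr0.
by rewrite (map_leib (hdtL hS) (hdtM hS)) hX2 hY2 mul0mx mulmx0 addr0.
Qed.

Lemma cst_tr (F : fieldType) (A : comUnitAlgType F) (S : diffalg A) m n (X : 'M[A]_(m,n)) :
  is_const_mx S X -> is_const_mx S X^T.
Proof. by case=> h1 h2; split; rewrite -map_trmx ?h1 ?h2 trmx0. Qed.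

Lemma cst_inv (F : fieldType) (A : comUnitAlgType F) (S : diffalg A) : good_diffalg S ->
  forall n (X : 'M[A]_n), X \in unitmx -> is_const_mx S X -> is_const_mx S (invmx X).
Proof.
move=> hS n X hu [h1 h2]; split.
  by rewrite (map_dinv (hdxL hS) (hdxM hS) hu) h1 mulmx0 mul0mx oppr0.
by rewrite (map_dinv (hdtL hS) (hdtM hS) hu) h2 mulmx0 mul0mx oppr0.
Qed.

Lemma act_mulr (F : fieldType) (A : comUnitAlgType F) (S : diffalg A) : good_diffalg S ->
  forall p q (P : op A p q) K K' (f : 'M[A]_(p,K)) (X : 'M[A]_(K,K')),
  is_const_mx S X -> act S P (f *m X) = act S P f *m X.
Proof.
move=> hS p q P; elim: P => {p q} [p q a | p | p | p | p q P1 IH1 P2 IH2 | p q r P1 IH1 P2 IH2]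
  K K' f X hX /=.
- by rewrite mulmxA.
- by case: hX => h1 _; rewrite (map_leib (hdxL hS) (hdxM hS)) h1 mulmx0 addr0.
- apply: (map_mulc (P := fun c => dx S c = 0)); first exact: hixL.
    by move=> g c hc; rewrite ix_mulc.
  by move=> i j; case: (cst_entry hX i j).
- by case: hX => _ h2; rewrite (map_leib (hdtL hS) (hdtM hS)) h2 mulmx0 addr0.
- by rewrite IH1 // IH2 // mulmxDl.
- by rewrite IH2 // IH1.
Qed.
Theorem corollary3 (F : fieldType) (A : comUnitAlgType F) (S : diffalg A)
    (hS : good_diffalg S)
    (N K m n : nat) (alpha gamma : F) (J : 'M[A]_N) (v : nat -> 'M[A]_N)
    (qf rf : 'M[A]_(N, m)) (M0 : 'M[A]_m)
    (phi psi : 'M[A]_(N, K)) (Lam Lamt C : 'M[A]_K) :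
  is_const_mx S J -> is_const_mx S M0 ->
  is_const_mx S Lam -> is_const_mx S Lamt -> is_const_mx S C ->
  C \in unitmx ->
  Delta S C phi psi \in unitmx ->
  act S (Mop n alpha gamma J v qf rf M0) phi = phi *m Lam ->
  act S (tau (Mop n alpha gamma J v qf rf M0)) psi = psi *m Lamt ->
  let Dl := Delta S C phi psi in
  let Mn := Mop n alpha gamma J v qf rf M0 in
  let Phi := phi *m invmx Dl in
  let Psi := psi *m (invmx Dl)^T in
  [/\ Phi = act S (Wop S C phi psi) phi *m invmx C,
      Psi = act S (tau (Winvop S C phi psi)) psi *m invmx C^T,
      act S (hatM S Mn C phi psi) Phi = Phi *m (C *m Lam *m invmx C) &
      act S (tau (hatM S Mn C phi psi)) Psi
        = Psi *m (C^T *m Lamt *m invmx C^T)].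
Proof.
move=> cJ cM0 cL cLt cC uC uD hM hMt Dl Mn Phi Psi.
have ixL := hixL hS.
have hD : map_mx (ix S) (psi^T *m phi) = Dl - C by rewrite /Dl /Delta addrC addKr.
have eW : forall K' (f : 'M[A]_(N,K')), act S (Wop S C phi psi) f
   = f - phi *m invmx Dl *m map_mx (ix S) (psi^T *m f).
  by move=> K' f; rewrite /= mul1mx mul_scalar_mx scaleN1r.
have eWi : forall K' (f : 'M[A]_(N,K')), act S (Winvop S C phi psi) f
   = f + phi *m map_mx (ix S) (invmx Dl *m psi^T *m f).
  by move=> K' f; rewrite /= mul1mx.
have eWt : forall K' (f : 'M[A]_(N,K')), act S (tau (Wop S C phi psi)) f
   = f + psi *m map_mx (ix S) ((phi *m invmx Dl)^T *m f).
  move=> K' f; rewrite /= tr_scalar_mx !mul1mx !mul_scalar_mx !scaleN1r trmxK.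
  by rewrite tr_scalar_mx mul_scalar_mx scaleN1r !mulmxN (mapN ixL) mulmxN opprK.
have eWit : forall K' (f : 'M[A]_(N,K')), act S (tau (Winvop S C phi psi)) f
   = f - (invmx Dl *m psi^T)^T *m map_mx (ix S) (phi^T *m f).
  by move=> K' f; rewrite /= tr_scalar_mx !mul1mx !mul_scalar_mx !scaleN1r mulmxN.
have dxL := hdxL hS.
have evL := hevL hS.
have hW1 : act S (Wop S C phi psi) phi = Phi *m C.
  by rewrite eW hD mulmxBr mulmxKV // opprB addrC subrK.
have hW2 : act S (tau (Winvop S C phi psi)) psi = Psi *m C^T.
  have e1 : phi^T *m psi = (psi^T *m phi)^T by rewrite trmx_mul trmxK.
  rewrite eWit e1 -map_trmx hD trmx_mul trmxK /Psi linearB /= mulmxBr.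
  rewrite trmx_inv mulmxKV ?unitmx_tr // opprB addrC subrK //.
have hdD : map_mx (dx S) Dl = psi^T *m phi.
  rewrite /Dl /Delta (mapD dxL) (proj1 cC) add0r.
  by apply/matrixP=> i j; rewrite !mxE hdxix.
have hdI : map_mx (dx S) (invmx Dl) = - (invmx Dl *m psi^T *m phi *m invmx Dl).
  by rewrite (map_dinv dxL (hdxM hS) uD) hdD !mulmxA.
have hE : map_mx (ev S) (invmx Dl) = invmx C.
  have e1 : map_mx (ev S) Dl = C.
    rewrite /Dl /Delta (mapD evL); apply/matrixP=> i j; rewrite !mxE ev_ix // addr0.
    by rewrite ev_c //; case: (cst_entry cC i j).
  have e2 : C *m map_mx (ev S) (invmx Dl) = 1%:M.
    rewrite -{1}e1 -map_ev_mul // mulmxV //.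
    apply/matrixP=> i j; rewrite !mxE; case: (i == j) => /=.
      by rewrite !mulr1n ev_c // (d_one (hdxM hS)).
    by rewrite !mulr0n (lin0 evL).
  by rewrite -[map_mx (ev S) _](mulKmx uC) e2 mulmx1.
have hK : map_mx (ix S) (invmx Dl *m psi^T *m phi *m invmx Dl) = invmx C - invmx Dl.
  have -> : invmx Dl *m psi^T *m phi *m invmx Dl = - map_mx (dx S) (invmx Dl) by rewrite hdI opprK.
  rewrite (mapN ixL).
  have -> : map_mx (ix S) (map_mx (dx S) (invmx Dl)) = invmx Dl - map_mx (ev S) (invmx Dl).
    by apply/matrixP=> i j; rewrite !mxE hixdx.
  by rewrite hE opprB.
have cCi : is_const_mx S (invmx C) by exact: cst_inv.
have cCti : is_const_mx S (invmx C^T) by apply: cst_inv => //; [rewrite unitmx_tr | exact: cst_tr].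
split.
- by rewrite hW1 mulmxK.
- by rewrite hW2 mulmxK // unitmx_tr.
- have -> : act S (hatM S Mn C phi psi) Phi
     = act S (Wop S C phi psi) (act S Mn (act S (Winvop S C phi psi) Phi)) by [].
  have -> : act S (Winvop S C phi psi) Phi = phi *m invmx C.
    by rewrite eWi /Phi mulmxA hK mulmxBr addrC subrK.
  rewrite (act_mulr hS) // hM -mulmxA (act_mulr hS); last exact: cst_mul.
  by rewrite hW1 !mulmxA.
- have -> : act S (tau (hatM S Mn C phi psi)) Psi
     = act S (tau (Winvop S C phi psi)) (act S (tau Mn) (act S (tau (Wop S C phi psi)) Psi)) by [].
  have -> : act S (tau (Wop S C phi psi)) Psi = psi *m invmx C^T.
    have eT : (phi *m invmx Dl)^T *m (psi *m (invmx Dl)^T)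
        = (invmx Dl *m psi^T *m phi *m invmx Dl)^T by rewrite !trmx_mul trmxK !mulmxA.
    rewrite eWt eT -map_trmx hK /Psi linearB /= mulmxBr addrC subrK trmx_inv //.
  rewrite (act_mulr hS) // hMt -mulmxA (act_mulr hS); last exact: cst_mul.
  by rewrite hW2 !mulmxA.
Qed.
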